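(* With $TS$, $\Delta$ and $P'_w$ as below, if a configuration $s\in S$ is reachable in the reconfigurable broadcast network $RBN(TS)$ (i.e. there exist $\theta_0\in\Theta_0$, $\theta$ with $\theta_0\xrightarrow{*}\theta$ in $RBN(TS)$ and a vertex $v$ of $\theta$ with $L_\theta(v)=s$), then $s$ is reachable in $TS(P'_w)$.
   Context: Fix a finite alphabet $\Sigma$; let $\Sigma_b=\{!!a:a\in\Sigma\}$ and $\Sigma_r=\{??a:a\in\Sigma\}$. A labelled WSTS is a tuple $(S,\Lambda,S_0,R,\le)$ with $S$ a set of configurations, $\Lambda$ a finite alphabet, $S_0\subseteq S$ initial, $R\subseteq S\times\Lambda\times S$, and $\le$ a well-quasi-order on $S$ compatible with $R$: if $s_1\le t_1$ and $(s_1,a,s_2)\in R$ then there is $t_2$ with $(t_1,a,t_2)\in R$ and $s_2\le t_2$. A process is a labelled WSTS with $\Lambda=\Sigma_b\cup\Sigma_r$, given by a finite set $\Delta$ of labelled rules, each rule inducing transitions of $R$ with its label, $R$ being the union of these. For $\Delta'\subseteq\Delta$, $TS(\Delta')$ is the system with the same $S,S_0,\le$ but only transitions induced by rules in $\Delta'$ (assumed a labelled WSTS). For a rule $t$, $c_t$ is the finite set of $\le$-minimal configurations at which $t$ is enabled. $B_a$ (resp. $R_a$) is the set of rules labelled $!!a$ (resp. $??a$), $Rec=\bigcup_aR_a$. A configuration $c$ is coverable if some reachable $c'$ has $c'\ge c$. $P'_0=\Delta\setminus Rec$; for $i\ge1$, $AddT_i$ is the union of $R_a$ over letters $a$ not handled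 in earlier rounds such that some $t\in B_a$ has an element of $c_t$ coverable in $TS(P'_{i-1})$, and $P'_i=P'_{i-1}\cup AddT_i$; $P'_w$ is the final set, reached when no further rules are added. An $S$-graph is a finite undirected graph $(V,E,L)$ without self-loops with $L:V\to S$; $\Theta$ is the set of all such, $\Theta_0$ those with all labels in $S_0$. Broadcast step: $(V,E,L)\xrightarrow{a}(V,E,L')$ if some $v$ has $(L(v),!!a,L'(v))\in R$, every neighbour $u$ of $v$ has $(L(u),??a,L'(u))\in R$, and all other labels unchanged. Reconfiguration step: $(V,E,L)\to(V,E',L)$ for any edge set $E'$ on $V$ without self-loops. $RBN(TS)$ is the transition system on $\Theta$ with initial set $\Theta_0$ and both kinds of steps. *)

(* Defs.v *)
From mathcomp Require Import all_boot.
From Stdlib Require Import Relations.Relation_Operators.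
Set Implicit Arguments.
Unset Strict Implicit.
Unset Printing Implicit Defensive.

Inductive act (Sig : Type) : Type :=
| Bcast (a : Sig)
| Recv (a : Sig).

Section Defs.
Variables (Sig Rule : finType) (S : Type).
Variables (le : S -> S -> Prop) (S0 : S -> Prop).
Variables (lab : Rule -> act Sig) (rstep : Rule -> S -> S -> Prop).

Definition wqo : Prop :=
  (forall x, le x x) /\ (forall x y z, le x y -> le y z -> le x z) /\
  (forall f : nat -> S, exists i j, i < j /\ le (f i) (f j)).

Definition trans (D : Rule -> Prop) (s : S) (l : act Sig) (s' : S) : Prop :=
  exists t, D t /\ lab t = l /\ rstep t s s'.

Definition compatible (D : Rule -> Prop) : Prop :=
  forall s1 t1 l s2, le s1 t1 -> trans D s1 l s2 ->
    exists t2, trans D t1 l t2 /\ le s2 t2.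

Definition reachableTS (D : Rule -> Prop) (s : S) : Prop :=
  exists s0, S0 s0 /\
    clos_refl_trans S (fun x y => exists l, trans D x l y) s0 s.

Definition coverableTS (D : Rule -> Prop) (c : S) : Prop :=
  exists c', reachableTS D c' /\ le c c'.

Definition enabled (t : Rule) (s : S) : Prop := exists s', rstep t s s'.

Definition in_ct (t : Rule) (c : S) : Prop :=
  enabled t c /\ forall c', enabled t c' -> le c' c -> le c c'.

Definition is_recv (t : Rule) : Prop := exists a, lab t = Recv a.

Definition letter_cond (P : Rule -> Prop) (a : Sig) : Prop :=
  exists t, lab t = Bcast a /\ exists c, in_ct t c /\ coverableTS P c.

(* (P'_i, letters handled in rounds 1..i) *)
Fixpoint Pstate (i : nat) : (Rule -> Prop) * (Sig -> Prop) :=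
  match i with
  | 0 => (fun t => ~ is_recv t, fun _ => False)
  | i'.+1 =>
      let (P, H) := Pstate i' in
      let newl := fun a => ~ H a /\ letter_cond P a in
      (fun t => P t \/ exists a, newl a /\ lab t = Recv a,
       fun a => H a \/ newl a)
  end.

Definition Pprime (i : nat) : Rule -> Prop := fst (Pstate i).

(* P'_w : the final set = the limit of the increasing chain P'_0 ⊆ P'_1 ⊆ ...
   (which stabilises since the rule set is finite) *)
Definition Pw : Rule -> Prop := fun t => exists i, Pprime i t.

Record sgraph (n : nat) := SGraph { gE : 'I_n -> 'I_n -> Prop; gL : 'I_n -> S }.

Definition wf_edges n (E : 'I_n -> 'I_n -> Prop) : Prop :=
  (forall u v, E u v -> E v u) /\ (forall v, ~ E v v).

Definition initial n (g : sgraph n) : Prop :=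
  wf_edges (gE g) /\ forall v, S0 (gL g v).

Definition bcast_step n (g g' : sgraph n) : Prop :=
  gE g' = gE g /\
  exists (a : Sig) (v : 'I_n),
    (exists t, lab t = Bcast a /\ rstep t (gL g v) (gL g' v)) /\
    (forall u, gE g v u -> exists t, lab t = Recv a /\ rstep t (gL g u) (gL g' u)) /\
    (forall u, u <> v -> ~ gE g v u -> gL g' u = gL g u).

Definition reconf_step n (g g' : sgraph n) : Prop :=
  wf_edges (gE g') /\ gL g' = gL g.

Definition rbn_step n (g g' : sgraph n) : Prop := bcast_step g g' \/ reconf_step g g'.

Definition reachableRBN (s : S) : Prop :=
  exists n (g0 g : sgraph n), initial g0 /\
    clos_refl_trans (sgraph n) (@rbn_step n) g0 g /\ exists v, gL g v = s.

End Defs.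

(* Main.v *)
From Stdlib Require Import Relations.Relation_Operators Classical ClassicalEpsilon Lia.
Require Import Defs.
From mathcomp Require Import all_boot.

Lemma crt_impl (A : Type) (R1 R2 : A -> A -> Prop) :
  (forall x y, R1 x y -> R2 x y) -> forall x y, clos_refl_trans A R1 x y -> clos_refl_trans A R2 x y.
Proof.
  move=> H x y; induction 1; [apply rt_step; auto|apply rt_refl|eapply rt_trans; eauto].
Qed.

Section Aux.
Variables (Sig Rule : finType) (S : Type).
Variables (le : S -> S -> Prop) (S0 : S -> Prop).
Variables (lab : Rule -> act Sig) (rstep : Rule -> S -> S -> Prop).

Notation PS := (Pstate le S0 lab rstep).
Notation PP := (Pprime le S0 lab rstep).

Lemma Pstate_S i : PS i.+1 =
  (fun t => fst (PS i) t \/ exists a, (~ snd (PS i) a /\ letter_cond le S0 lab rstep (fst (PS i)) a) /\ lab t = Recv a,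
   fun a => snd (PS i) a \/ (~ snd (PS i) a /\ letter_cond le S0 lab rstep (fst (PS i)) a)).
Proof. simpl. by destruct (PS i). Qed.

Lemma PP_S i t : PP i t -> PP i.+1 t.
Proof. rewrite /Pprime Pstate_S /=. by left. Qed.

Lemma PP_mono i j t : (i <= j)%coq_nat -> PP i t -> PP j t.
Proof. induction 1; auto. intros; apply PP_S; auto. Qed.

Lemma H_recv i a : snd (PS i) a -> forall t, lab t = Recv a -> PP i t.
Proof.
  induction i; [simpl; tauto|].
  rewrite Pstate_S /= => [[Ha|[Hn Hl]]] t Ht.
  - rewrite /Pprime Pstate_S /=. left. by apply IHi.
  - rewrite /Pprime Pstate_S /=. right. exists a. auto.
Qed.

Lemma reach_fin s : reachableTS S0 lab rstep (Pw le S0 lab rstep) s ->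
  exists N, reachableTS S0 lab rstep (PP N) s.
Proof.
  move=> [s0 [H0 Hr]].
  suff: exists N, clos_refl_trans S (fun x y => exists l, trans lab rstep (PP N) x l y) s0 s.
  { move=> [N HN]; exists N, s0; auto. }
  clear H0.
  induction Hr as [x y Hxy|x|x y z _ IH1 _ IH2].
  - destruct Hxy as [l [t [[i Hi] [Hl Hs]]]]. exists i. apply rt_step. exists l, t. auto.
  - exists 0. apply rt_refl.
  - destruct IH1 as [N1 H1]; destruct IH2 as [N2 H2]. exists (Nat.max N1 N2). eapply rt_trans.
    + eapply crt_impl; [|exact H1]. move=> a b [l [t [Ht Hr]]].
      exists l, t; split; auto. eapply PP_mono; [|exact Ht]; lia.
    + eapply crt_impl; [|exact H2]. move=> a b [l [t [Ht Hr]]].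
      exists l, t; split; auto. eapply PP_mono; [|exact Ht]; lia.
Qed.

Lemma min_exists (Hw : wqo le) (t : Rule) x : enabled rstep t x ->
  exists c, in_ct le rstep t c /\ le c x.
Proof.
  move=> Hx. apply NNPP => Hno.
  have step : forall y : {y | enabled rstep t y /\ le y x},
      {z : {y | enabled rstep t y /\ le y x} | le (proj1_sig z) (proj1_sig y) /\ ~ le (proj1_sig y) (proj1_sig z)}.
  { move=> [y [Hy Hyx]]. apply constructive_indefinite_description.
    apply NNPP => Hn. apply Hno. exists y. split; auto. split; auto.
    move=> c' Hc' Hle. apply NNPP => Hn2. apply Hn.
    have Hc'x : enabled rstep t c' /\ le c' x.
    { split; auto. destruct Hw as [_ [Htr _]]. eauto. }
    exists (exist _ c' Hc'x). simpl. auto. }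
  have Hr : forall x0, le x0 x0 by case: Hw.
  pose f := fix f n := match n with 0 => exist _ x (conj Hx (Hr x)) | n.+1 => proj1_sig (step (f n)) end.
  destruct Hw as [_ [Htr Hwf]].
  have desc : forall i j, (i < j)%coq_nat -> le (proj1_sig (f j)) (proj1_sig (f i.+1)).
  { move=> i j; induction 1. apply Hr. eapply Htr; [|exact IHle].
    simpl. exact (proj1 (proj2_sig (step (f m)))). }
  destruct (Hwf (fun n => proj1_sig (f n))) as [i [j [Hij Hle]]].
  have Hij' : (i < j)%coq_nat by apply/ltP.
  apply (proj2 (proj2_sig (step (f i)))). simpl.
  change (le (proj1_sig (f i)) (proj1_sig (f i.+1))).
  eapply Htr; [exact Hle|]. by apply desc.
Qed.

Lemma bcast_recv (Hw : wqo le) a t x s' :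
  reachableTS S0 lab rstep (Pw le S0 lab rstep) x -> lab t = Bcast a -> rstep t x s' ->
  forall t', lab t' = Recv a -> Pw le S0 lab rstep t'.
Proof.
  move=> Hx Ht Hs t' Ht'.
  destruct (@min_exists Hw t x (ex_intro _ s' Hs)) as [c [Hc Hcx]].
  destruct (@reach_fin x Hx) as [N HN].
  have Hlc : letter_cond le S0 lab rstep (PP N) a.
  { exists t; split; auto. exists c; split; auto. exists x; auto. }
  exists N.+1.
  destruct (classic (snd (PS N) a)) as [Ha|Ha].
  - apply PP_S. by apply (@H_recv N a Ha).
  - rewrite /Pprime Pstate_S /=. right. exists a. auto.
Qed.

End Aux.

Theorem lemma11 (Sig Rule : finType) (S : Type)
  (le : S -> S -> Prop) (S0 : S -> Prop)
  (lab : Rule -> act Sig) (rstep : Rule -> S -> S -> Prop)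
  (Hwqo : wqo le)
  (Hcompat : forall D : Rule -> Prop, compatible le lab rstep D)
  (s : S) :
  reachableRBN S0 lab rstep s -> reachableTS S0 lab rstep (Pw le S0 lab rstep) s.
Proof.
  move=> [n [g0 [g [[_ Hinit] [Hrt [v <-]]]]]].
  set Pw' := Pw le S0 lab rstep.
  have ext : forall x y t l, reachableTS S0 lab rstep Pw' x -> Pw' t -> lab t = l -> rstep t x y ->
      reachableTS S0 lab rstep Pw' y.
  { move=> x y t l [x0 [Hx0 Hr]] Ht Hl Hs. exists x0; split; auto.
    eapply rt_trans; [exact Hr|]. apply rt_step. exists l, t. auto. }
  suff: forall g1 g2, clos_refl_trans (sgraph S n) (@rbn_step Sig Rule S lab rstep n) g1 g2 ->
    (forall u, reachableTS S0 lab rstep Pw' (gL g1 u)) -> forall u, reachableTS S0 lab rstep Pw' (gL g2 u).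
  { move=> H; apply (H g0 g Hrt). move=> u; exists (gL g0 u); split; auto. apply rt_refl. }
  induction 1 as [g1 g2 Hs|g1|g1 g2 g3 _ IH1 _ IH2]; auto.
  move=> Hinv u.
  case: Hs => [[HE [a [w [[t [Ht Hst]] [Hnb Hoth]]]]]|[_ HL]]; last by rewrite HL.
  destruct (classic (u = w)) as [->|Hne].
  - eapply ext; [exact (Hinv w)| |exact Ht|exact Hst].
    exists 0. rewrite /Pprime /=. move=> [b Hb]. by rewrite Ht in Hb.
  - destruct (classic (gE g1 w u)) as [He|He].
    + destruct (Hnb u He) as [t' [Ht' Hst']].
      eapply ext; [exact (Hinv u)| |exact Ht'|exact Hst'].
      exact (@bcast_recv _ _ _ _ _ _ _ Hwqo _ _ _ _ (Hinv w) Ht Hst _ Ht').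
    + by rewrite Hoth.
Qed.
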